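(* Let $\alpha,\beta$ be real constants with $\alpha\neq0$ and $\alpha\beta^2-4\alpha^2\neq0$, and let $\Omega\subseteq\mathbb{R}^2$ be a domain. Consider real-valued continuously differentiable functions $a_{jk},b_{jk}$ ($j,k\in\{1,2\}$), $c_l,d_l$ ($l\in\{1,2,3\}$) on $\Omega$, and the operator sending a pair of real $C^2$ functions $(u,v)$ on $\Omega$ to $(P,Q)$ with $$P=a_{11}\partial_xu+a_{12}\partial_yu+a_{21}\partial_xv+a_{22}\partial_yv+c_1u+c_2v+c_3,$$ $$Q=b_{11}\partial_xu+b_{12}\partial_yu+b_{21}\partial_xv+b_{22}\partial_yv+d_1u+d_2v+d_3.$$ Writing $w=u+iv$, this operator, viewed as $w\mapsto P+iQ$, is associated to the Cauchy–Riemann operator $\partial_{\bar z}$ (i.e. maps holomorphic $w$ to holomorphic $P+iQ$) if and only if: $c_1+id_1$ and $c_3+id_3$ are holomorphic, $c_2=-\alpha d_1$, $d_2=c_1-\beta d_1$, and there is a holomorphic function $A_1+iA_2$ ($A_1,A_2$ real) such that $$a_{21}=-\alpha A_2+a_{12},\quad a_{22}=\alpha A_1-\alpha a_{11}-\beta a_{12},\quad b_{21}=A_1-\beta A_2+b_{12},\quad b_{22}=\alpha A_2-\alpha b_{11}-\beta b_{12},$$ the coefficients $a_{11},a_{12},b_{11},b_{12}$ being otherwise arbitrary.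
   Context: For real parameters $\alpha,\beta$, $\mathbb{C}(\alpha,\beta)$ denotes the real algebra of numbers $x+iy$ with $i^2=-\alpha-\beta i$; products are $(x_1+iy_1)(x_2+iy_2)=(x_1x_2-\alpha y_1y_2)+i(x_1y_2+x_2y_1-\beta y_1y_2)$ and conjugation is $\overline{x+iy}=x-iy$. For $w=u+iv$ with real $u,v$ depending on $(x,y)$, $\partial_{\bar z}=\tfrac12(\partial_x+i\partial_y)$, and $w$ is holomorphic if $\partial_{\bar z}w=0$, i.e. $\partial_xu-\alpha\partial_yv=0$ and $\partial_yu+\partial_xv-\beta\partial_yv=0$. An operator $\mathbf{L}$ is associated to $\partial_{\bar z}$ if $\partial_{\bar z}w=0$ implies $\partial_{\bar z}(\mathbf{L}w)=0$. *)

(* Defs.v *)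
From Stdlib Require Import Reals.
From Coquelicot Require Import Coquelicot.
Open Scope R_scope.

Definition open2 (U : R -> R -> Prop) : Prop :=
  forall x y, U x y -> exists eps : R, 0 < eps /\
    forall x' y', Rabs (x' - x) < eps -> Rabs (y' - y) < eps -> U x' y'.

Definition plane_domain (Om : R -> R -> Prop) : Prop :=
  (exists x y, Om x y) /\ open2 Om /\
  forall U V : R -> R -> Prop, open2 U -> open2 V ->
    (forall x y, Om x y -> U x y \/ V x y) ->
    (forall x y, Om x y -> U x y -> V x y -> False) ->
    (forall x y, Om x y -> U x y) \/ (forall x y, Om x y -> V x y).

Definition dx (f : R -> R -> R) (x y : R) : R := Derive (fun t => f t y) x.
Definition dy (f : R -> R -> R) (x y : R) : R := Derive (fun t => f x t) y.

Definition C1_on (Om : R -> R -> Prop) (f : R -> R -> R) : Prop :=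
  forall x y, Om x y ->
    ex_derive (fun t => f t y) x /\ ex_derive (fun t => f x t) y /\
    continuity_2d_pt f x y /\ continuity_2d_pt (dx f) x y /\
    continuity_2d_pt (dy f) x y.

Definition C2_on (Om : R -> R -> Prop) (f : R -> R -> R) : Prop :=
  C1_on Om f /\ C1_on Om (dx f) /\ C1_on Om (dy f).

(** w = u + i v is holomorphic on Om in C(alpha,beta):
    u, v continuously differentiable and d_{zbar} w = 0, i.e.
    u_x - alpha v_y = 0 and u_y + v_x - beta v_y = 0. *)
Definition holomorphic (alpha beta : R) (Om : R -> R -> Prop)
  (u v : R -> R -> R) : Prop :=
  C1_on Om u /\ C1_on Om v /\
  forall x y, Om x y ->
    dx u x y - alpha * dy v x y = 0 /\
    dy u x y + dx v x y - beta * dy v x y = 0.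

Definition opP (a11 a12 a21 a22 c1 c2 c3 : R -> R -> R)
  (u v : R -> R -> R) : R -> R -> R :=
  fun x y => a11 x y * dx u x y + a12 x y * dy u x y
           + a21 x y * dx v x y + a22 x y * dy v x y
           + c1 x y * u x y + c2 x y * v x y + c3 x y.

(** The operator w = u + i v |-> P + i Q is associated to d_{zbar} on Om:
    it maps every holomorphic w (with u, v of class C^2, the domain of the
    operator) to a holomorphic function. *)
Definition associated (alpha beta : R) (Om : R -> R -> Prop)
  (P Q : (R -> R -> R) -> (R -> R -> R) -> (R -> R -> R)) : Prop :=
  forall u v : R -> R -> R, C2_on Om u -> C2_on Om v ->
    holomorphic alpha beta Om u v ->
    holomorphic alpha beta Om (P u v) (Q u v).

(* Main.v *)
Require Import Defs.
From Stdlib Require Import Reals Lra FunctionalExtensionality.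
From Coquelicot Require Import Coquelicot.
Open Scope R_scope.

Definition exdx (f : R -> R -> R) x y := ex_derive (fun t => f t y) x.
Definition exdy (f : R -> R -> R) x y := ex_derive (fun t => f x t) y.

Lemma dx_is f x y l : is_derive (fun t => f t y) x l -> dx f x y = l.
Proof. intro H. unfold dx. now apply is_derive_unique. Qed.
Lemma dy_is f x y l : is_derive (fun t => f x t) y l -> dy f x y = l.
Proof. intro H. unfold dy. now apply is_derive_unique. Qed.

Lemma open_loc2 Om x y : open2 Om -> Om x y -> locally_2d (fun u v => Om u v) x y.
Proof.
  intros HO Hp. destruct (HO x y Hp) as [eps [He Hf]].
  exists (mkposreal eps He). simpl. auto.
Qed.

Lemma open_locx Om x y : open2 Om -> Om x y -> locally x (fun t => Om t y).
Proof.
  intros HO Hp. destruct (HO x y Hp) as [eps [He Hf]].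
  exists (mkposreal eps He). intros t Ht. apply Hf.
  - exact Ht.
  - rewrite Rminus_eq_0, Rabs_R0. exact He.
Qed.

Lemma open_locy Om x y : open2 Om -> Om x y -> locally y (fun t => Om x t).
Proof.
  intros HO Hp. destruct (HO x y Hp) as [eps [He Hf]].
  exists (mkposreal eps He). intros t Ht. apply Hf.
  - rewrite Rminus_eq_0, Rabs_R0. exact He.
  - exact Ht.
Qed.

Lemma dx_ext Om f g x y : open2 Om -> Om x y ->
  (forall s t, Om s t -> f s t = g s t) -> dx f x y = dx g x y.
Proof.
  intros HO Hp Hfg. unfold dx. apply Derive_ext_loc.
  destruct (open_locx Om x y HO Hp) as [eps He].
  exists eps. intros t Ht. apply Hfg, He, Ht.
Qed.

Lemma dy_ext Om f g x y : open2 Om -> Om x y ->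
  (forall s t, Om s t -> f s t = g s t) -> dy f x y = dy g x y.
Proof.
  intros HO Hp Hfg. unfold dy. apply Derive_ext_loc.
  destruct (open_locy Om x y HO Hp) as [eps He].
  exists eps. intros t Ht. apply Hfg, He, Ht.
Qed.

Lemma dx_zero5 Om k1 k2 k3 k4 k5 (f1 f2 f3 f4 f5 : R -> R -> R) x y :
  open2 Om -> Om x y ->
  (forall s t, Om s t -> k1 * f1 s t + k2 * f2 s t + k3 * f3 s t + k4 * f4 s t + k5 * f5 s t = 0) ->
  exdx f1 x y -> exdx f2 x y -> exdx f3 x y -> exdx f4 x y -> exdx f5 x y ->
  k1 * dx f1 x y + k2 * dx f2 x y + k3 * dx f3 x y + k4 * dx f4 x y + k5 * dx f5 x y = 0.
Proof.
  unfold exdx; intros HO Hp H H1 H2 H3 H4 H5.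
  transitivity (dx (fun s t => k1 * f1 s t + k2 * f2 s t + k3 * f3 s t + k4 * f4 s t + k5 * f5 s t) x y).
  - symmetry. apply dx_is. auto_derive.
    + repeat split; assumption.
    + unfold dx; ring.
  - rewrite (dx_ext Om _ (fun _ _ => 0) x y HO Hp H). unfold dx. apply Derive_const.
Qed.

Lemma dy_zero5 Om k1 k2 k3 k4 k5 (f1 f2 f3 f4 f5 : R -> R -> R) x y :
  open2 Om -> Om x y ->
  (forall s t, Om s t -> k1 * f1 s t + k2 * f2 s t + k3 * f3 s t + k4 * f4 s t + k5 * f5 s t = 0) ->
  exdy f1 x y -> exdy f2 x y -> exdy f3 x y -> exdy f4 x y -> exdy f5 x y ->
  k1 * dy f1 x y + k2 * dy f2 x y + k3 * dy f3 x y + k4 * dy f4 x y + k5 * dy f5 x y = 0.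
Proof.
  unfold exdy; intros HO Hp H H1 H2 H3 H4 H5.
  transitivity (dy (fun s t => k1 * f1 s t + k2 * f2 s t + k3 * f3 s t + k4 * f4 s t + k5 * f5 s t) x y).
  - symmetry. apply dy_is. auto_derive.
    + repeat split; assumption.
    + unfold dy; ring.
  - rewrite (dy_ext Om _ (fun _ _ => 0) x y HO Hp H). unfold dy. apply Derive_const.
Qed.

Lemma C1_at Om f x y : C1_on Om f -> Om x y ->
  exdx f x y /\ exdy f x y /\ continuity_2d_pt f x y /\ continuity_2d_pt (dx f) x y /\
  continuity_2d_pt (dy f) x y.
Proof. intros H Hp. exact (H x y Hp). Qed.

Lemma schwarz_C2 Om f x y : open2 Om -> Om x y -> C2_on Om f ->
  dx (dy f) x y = dy (dx f) x y.
Proof.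
  intros HO Hp [H0 [Hx Hy]].
  unfold dx at 1, dy at 1.
  change (Derive (fun z => Derive (fun t => f z t) y) x =
          Derive (fun z => Derive (fun t => f t z) x) y).
  apply Schwarz.
  - destruct (open_loc2 Om x y HO Hp) as [d Hd]. exists d. intros s t Hs Ht.
    specialize (Hd s t Hs Ht).
    destruct (H0 s t Hd) as [A [B _]]. destruct (Hy s t Hd) as [C _].
    destruct (Hx s t Hd) as [_ [D _]].
    repeat split; assumption.
  - exact (proj1 (proj2 (proj2 (proj2 (Hy x y Hp))))).
  - exact (proj2 (proj2 (proj2 (proj2 (Hx x y Hp))))).
Qed.


Ltac cont := repeat (first [apply continuity_2d_pt_plus | apply continuity_2d_pt_minus | apply continuity_2d_pt_mult | apply continuity_2d_pt_const | apply continuity_2d_pt_id1 | apply continuity_2d_pt_id2]); try assumption.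

Lemma C1_lin3 Om k1 k2 k3 f1 f2 f3 : open2 Om ->
  C1_on Om f1 -> C1_on Om f2 -> C1_on Om f3 ->
  C1_on Om (fun s t => k1 * f1 s t + k2 * f2 s t + k3 * f3 s t).
Proof.
  intros HO H1 H2 H3 x y Hp.
  assert (Hx : forall s t, Om s t -> dx (fun s t => k1 * f1 s t + k2 * f2 s t + k3 * f3 s t) s t
     = k1 * dx f1 s t + k2 * dx f2 s t + k3 * dx f3 s t).
  { intros s t Hst. destruct (H1 s t Hst) as [A1 [B1 _]]. destruct (H2 s t Hst) as [A2 [B2 _]].
    destruct (H3 s t Hst) as [A3 [B3 _]].
    apply dx_is. auto_derive. repeat split; assumption. unfold dx; ring. }
  assert (Hy : forall s t, Om s t -> dy (fun s t => k1 * f1 s t + k2 * f2 s t + k3 * f3 s t) s t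
     = k1 * dy f1 s t + k2 * dy f2 s t + k3 * dy f3 s t).
  { intros s t Hst. destruct (H1 s t Hst) as [A1 [B1 _]]. destruct (H2 s t Hst) as [A2 [B2 _]].
    destruct (H3 s t Hst) as [A3 [B3 _]].
    apply dy_is. auto_derive. repeat split; assumption. unfold dy; ring. }
  destruct (H1 x y Hp) as [A1 [B1 [C1 [D1 E1]]]].
  destruct (H2 x y Hp) as [A2 [B2 [C2 [D2 E2]]]].
  destruct (H3 x y Hp) as [A3 [B3 [C3 [D3 E3]]]].
  split; [|split; [|split; [|split]]].
  - auto_derive. repeat split; assumption.
  - auto_derive. repeat split; assumption.
  - cont.
  - apply continuity_2d_pt_ext_loc with (f := fun s t => k1 * dx f1 s t + k2 * dx f2 s t + k3 * dx f3 s t).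
    + destruct (open_loc2 Om x y HO Hp) as [d Hd]. exists d. intros s t Hs Ht.
      symmetry. apply Hx. apply Hd; assumption.
    + cont.
  - apply continuity_2d_pt_ext_loc with (f := fun s t => k1 * dy f1 s t + k2 * dy f2 s t + k3 * dy f3 s t).
    + destruct (open_loc2 Om x y HO Hp) as [d Hd]. exists d. intros s t Hs Ht.
      symmetry. apply Hy. apply Hd; assumption.
    + cont.
Qed.

Definition quad (k0 k1 k2 k3 k4 k5 x0 y0 : R) : R -> R -> R :=
  fun x y => k0 + k1 * (x - x0) + k2 * (y - y0) + k3 * ((x - x0) * (x - x0))
     + k4 * ((x - x0) * (y - y0)) + k5 * ((y - y0) * (y - y0)).

Lemma dx_quad k0 k1 k2 k3 k4 k5 x0 y0 :
  dx (quad k0 k1 k2 k3 k4 k5 x0 y0) = quad k1 (2 * k3) k4 0 0 0 x0 y0.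
Proof.
  apply functional_extensionality; intro x; apply functional_extensionality; intro y.
  apply dx_is. unfold quad. auto_derive. easy. ring.
Qed.

Lemma dy_quad k0 k1 k2 k3 k4 k5 x0 y0 :
  dy (quad k0 k1 k2 k3 k4 k5 x0 y0) = quad k2 k4 (2 * k5) 0 0 0 x0 y0.
Proof.
  apply functional_extensionality; intro x; apply functional_extensionality; intro y.
  apply dy_is. unfold quad. auto_derive. easy. ring.
Qed.

Lemma C1_quad Om k0 k1 k2 k3 k4 k5 x0 y0 : C1_on Om (quad k0 k1 k2 k3 k4 k5 x0 y0).
Proof.
  intros x y _. rewrite dx_quad, dy_quad.
  split; [|split; [|split; [|split]]].
  - unfold quad. auto_derive. easy.
  - unfold quad. auto_derive. easy.
  - unfold quad. cont.
  - unfold quad. cont.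
  - unfold quad. cont.
Qed.

Lemma C2_quad Om k0 k1 k2 k3 k4 k5 x0 y0 : C2_on Om (quad k0 k1 k2 k3 k4 k5 x0 y0).
Proof.
  split; [|split]; [apply C1_quad | rewrite dx_quad; apply C1_quad | rewrite dy_quad; apply C1_quad].
Qed.

Lemma holo_quad alpha beta Om k0 k1 k2 k3 k4 k5 m0 m1 m2 m3 m4 m5 x0 y0 :
  k1 = alpha * m2 -> 2 * k3 = alpha * m4 -> k4 = 2 * alpha * m5 ->
  k2 + m1 - beta * m2 = 0 -> k4 + 2 * m3 - beta * m4 = 0 -> 2 * k5 + m4 - 2 * beta * m5 = 0 ->
  holomorphic alpha beta Om (quad k0 k1 k2 k3 k4 k5 x0 y0) (quad m0 m1 m2 m3 m4 m5 x0 y0).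
Proof.
  intros e1 e2 e3 e4 e5 e6. split; [apply C1_quad | split; [apply C1_quad|]].
  intros x y _. rewrite !dx_quad, !dy_quad. unfold quad. split.
  - rewrite e1, e3. replace (2 * k3) with (alpha * m4) by lra. ring.
  - replace k2 with (beta * m2 - m1) by lra. replace k4 with (beta * m4 - 2 * m3) by lra.
    replace (2 * k5) with (2 * beta * m5 - m4) by lra. ring.
Qed.


Definition dxP_formula (a11 a12 a21 a22 c1 c2 c3 u v : R -> R -> R) x y :=
  dx a11 x y * dx u x y + a11 x y * dx (dx u) x y
  + dx a12 x y * dy u x y + a12 x y * dx (dy u) x y
  + dx a21 x y * dx v x y + a21 x y * dx (dx v) x y
  + dx a22 x y * dy v x y + a22 x y * dx (dy v) x y
  + dx c1 x y * u x y + c1 x y * dx u x y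
  + dx c2 x y * v x y + c2 x y * dx v x y + dx c3 x y.

Definition dyP_formula (a11 a12 a21 a22 c1 c2 c3 u v : R -> R -> R) x y :=
  dy a11 x y * dx u x y + a11 x y * dy (dx u) x y
  + dy a12 x y * dy u x y + a12 x y * dy (dy u) x y
  + dy a21 x y * dx v x y + a21 x y * dy (dx v) x y
  + dy a22 x y * dy v x y + a22 x y * dy (dy v) x y
  + dy c1 x y * u x y + c1 x y * dy u x y
  + dy c2 x y * v x y + c2 x y * dy v x y + dy c3 x y.

Ltac getC1 H x y Hp :=
  let A := fresh "ex" in let B := fresh "ey" in
  destruct (H x y Hp) as [A [B _]].

Lemma dx_opP_eq Om a11 a12 a21 a22 c1 c2 c3 u v x y : Om x y ->
  C1_on Om a11 -> C1_on Om a12 -> C1_on Om a21 -> C1_on Om a22 ->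
  C1_on Om c1 -> C1_on Om c2 -> C1_on Om c3 -> C2_on Om u -> C2_on Om v ->
  dx (opP a11 a12 a21 a22 c1 c2 c3 u v) x y = dxP_formula a11 a12 a21 a22 c1 c2 c3 u v x y.
Proof.
  intros Hp H1 H2 H3 H4 H5 H6 H7 [Hu [Hux Huy]] [Hv [Hvx Hvy]].
  getC1 H1 x y Hp. getC1 H2 x y Hp. getC1 H3 x y Hp. getC1 H4 x y Hp.
  getC1 H5 x y Hp. getC1 H6 x y Hp. getC1 H7 x y Hp. getC1 Hu x y Hp. getC1 Hux x y Hp.
  getC1 Huy x y Hp. getC1 Hv x y Hp. getC1 Hvx x y Hp. getC1 Hvy x y Hp.
  apply dx_is. unfold opP, dxP_formula. auto_derive.
  - repeat split; assumption.
  - unfold dx; ring.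
Qed.

Lemma dy_opP_eq Om a11 a12 a21 a22 c1 c2 c3 u v x y : Om x y ->
  C1_on Om a11 -> C1_on Om a12 -> C1_on Om a21 -> C1_on Om a22 ->
  C1_on Om c1 -> C1_on Om c2 -> C1_on Om c3 -> C2_on Om u -> C2_on Om v ->
  dy (opP a11 a12 a21 a22 c1 c2 c3 u v) x y = dyP_formula a11 a12 a21 a22 c1 c2 c3 u v x y.
Proof.
  intros Hp H1 H2 H3 H4 H5 H6 H7 [Hu [Hux Huy]] [Hv [Hvx Hvy]].
  getC1 H1 x y Hp. getC1 H2 x y Hp. getC1 H3 x y Hp. getC1 H4 x y Hp.
  getC1 H5 x y Hp. getC1 H6 x y Hp. getC1 H7 x y Hp. getC1 Hu x y Hp. getC1 Hux x y Hp.
  getC1 Huy x y Hp. getC1 Hv x y Hp. getC1 Hvx x y Hp. getC1 Hvy x y Hp.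
  apply dy_is. unfold opP, dyP_formula. auto_derive.
  - repeat split; assumption.
  - unfold dy; ring.
Qed.

Ltac getC1all H x y Hp :=
  let A := fresh "ex" in let B := fresh "ey" in let C := fresh "c" in
  let D := fresh "cx" in let E := fresh "cy" in
  destruct (H x y Hp) as [A [B [C [D E]]]].

Lemma C1_opP Om a11 a12 a21 a22 c1 c2 c3 u v : open2 Om ->
  C1_on Om a11 -> C1_on Om a12 -> C1_on Om a21 -> C1_on Om a22 ->
  C1_on Om c1 -> C1_on Om c2 -> C1_on Om c3 -> C2_on Om u -> C2_on Om v ->
  C1_on Om (opP a11 a12 a21 a22 c1 c2 c3 u v).
Proof.
  intros HO H1 H2 H3 H4 H5 H6 H7 Cu Cv x y Hp.
  pose proof Cu as [Hu [Hux Huy]]. pose proof Cv as [Hv [Hvx Hvy]].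
  getC1all H1 x y Hp. getC1all H2 x y Hp. getC1all H3 x y Hp. getC1all H4 x y Hp.
  getC1all H5 x y Hp. getC1all H6 x y Hp. getC1all H7 x y Hp. getC1all Hu x y Hp.
  getC1all Hux x y Hp. getC1all Huy x y Hp. getC1all Hv x y Hp. getC1all Hvx x y Hp.
  getC1all Hvy x y Hp.
  split; [|split; [|split; [|split]]].
  - unfold opP. auto_derive. repeat split; assumption.
  - unfold opP. auto_derive. repeat split; assumption.
  - unfold opP. cont.
  - apply continuity_2d_pt_ext_loc with (f := dxP_formula a11 a12 a21 a22 c1 c2 c3 u v).
    + destruct (open_loc2 Om x y HO Hp) as [d Hd]. exists d. intros s t Hs Ht.
      symmetry. assert (Hst : Om s t) by (apply Hd; assumption). apply (dx_opP_eq Om); assumption.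
    + unfold dxP_formula. cont.
  - apply continuity_2d_pt_ext_loc with (f := dyP_formula a11 a12 a21 a22 c1 c2 c3 u v).
    + destruct (open_loc2 Om x y HO Hp) as [d Hd]. exists d. intros s t Hs Ht.
      symmetry. assert (Hst : Om s t) by (apply Hd; assumption). apply (dy_opP_eq Om); assumption.
    + unfold dyP_formula. cont.
Qed.


Definition Pxv (a11 a12 a21 a22 c1 c2 c3 : R -> R -> R) (k0 k1 k2 k3 k4 k5 m0 m1 m2 m3 m4 m5 : R) x y :=
  dx a11 x y * k1 + a11 x y * (2 * k3) + dx a12 x y * k2 + a12 x y * k4
  + dx a21 x y * m1 + a21 x y * (2 * m3) + dx a22 x y * m2 + a22 x y * m4
  + dx c1 x y * k0 + c1 x y * k1 + dx c2 x y * m0 + c2 x y * m1 + dx c3 x y.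

Definition Pyv (a11 a12 a21 a22 c1 c2 c3 : R -> R -> R) (k0 k1 k2 k3 k4 k5 m0 m1 m2 m3 m4 m5 : R) x y :=
  dy a11 x y * k1 + a11 x y * k4 + dy a12 x y * k2 + a12 x y * (2 * k5)
  + dy a21 x y * m1 + a21 x y * m4 + dy a22 x y * m2 + a22 x y * (2 * m5)
  + dy c1 x y * k0 + c1 x y * k2 + dy c2 x y * m0 + c2 x y * m2 + dy c3 x y.

Lemma test_eq (alpha beta : R) (Om : R -> R -> Prop)
  (a11 a12 a21 a22 b11 b12 b21 b22 c1 c2 c3 d1 d2 d3 : R -> R -> R)
  k0 k1 k2 k3 k4 k5 m0 m1 m2 m3 m4 m5 x y :
  C1_on Om a11 -> C1_on Om a12 -> C1_on Om a21 -> C1_on Om a22 ->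
  C1_on Om b11 -> C1_on Om b12 -> C1_on Om b21 -> C1_on Om b22 ->
  C1_on Om c1 -> C1_on Om c2 -> C1_on Om c3 ->
  C1_on Om d1 -> C1_on Om d2 -> C1_on Om d3 ->
  associated alpha beta Om
      (opP a11 a12 a21 a22 c1 c2 c3)
      (opP b11 b12 b21 b22 d1 d2 d3) ->
  k1 = alpha * m2 -> 2 * k3 = alpha * m4 -> k4 = 2 * alpha * m5 ->
  k2 + m1 - beta * m2 = 0 -> k4 + 2 * m3 - beta * m4 = 0 -> 2 * k5 + m4 - 2 * beta * m5 = 0 ->
  Om x y ->
  Pxv a11 a12 a21 a22 c1 c2 c3 k0 k1 k2 k3 k4 k5 m0 m1 m2 m3 m4 m5 x y
   - alpha * Pyv b11 b12 b21 b22 d1 d2 d3 k0 k1 k2 k3 k4 k5 m0 m1 m2 m3 m4 m5 x y = 0 /\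
  Pyv a11 a12 a21 a22 c1 c2 c3 k0 k1 k2 k3 k4 k5 m0 m1 m2 m3 m4 m5 x y
   + Pxv b11 b12 b21 b22 d1 d2 d3 k0 k1 k2 k3 k4 k5 m0 m1 m2 m3 m4 m5 x y
   - beta * Pyv b11 b12 b21 b22 d1 d2 d3 k0 k1 k2 k3 k4 k5 m0 m1 m2 m3 m4 m5 x y = 0.
Proof.
  intros Ha11 Ha12 Ha21 Ha22 Hb11 Hb12 Hb21 Hb22 Hc1 Hc2 Hc3 Hd1 Hd2 Hd3 Hass
    h1 h2 h3 h4 h5 h6 Hp.
  destruct (Hass (quad k0 k1 k2 k3 k4 k5 x y) (quad m0 m1 m2 m3 m4 m5 x y)
    (C2_quad _ _ _ _ _ _ _ _ _) (C2_quad _ _ _ _ _ _ _ _ _)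
    (holo_quad alpha beta Om _ _ _ _ _ _ _ _ _ _ _ _ x y h1 h2 h3 h4 h5 h6)) as [_ [_ Heq]].
  destruct (Heq x y Hp) as [E1 E2].
  rewrite (dx_opP_eq Om a11), (dy_opP_eq Om b11) in E1; try assumption; try apply C2_quad.
  rewrite (dy_opP_eq Om a11), (dx_opP_eq Om b11), (dy_opP_eq Om b11) in E2; try assumption; try apply C2_quad.
  unfold dxP_formula, dyP_formula in E1, E2.
  repeat rewrite ?dx_quad, ?dy_quad in E1, E2.
  unfold quad in E1, E2. unfold Pxv, Pyv.
  cbv beta in E1, E2.
  split; [etransitivity; [|exact E1] | etransitivity; [|exact E2]]; ring.
Qed.

Lemma lc6 c1 c2 c3 c4 c5 c6 e1 e2 e3 e4 e5 e6 X :
  e1 = 0 -> e2 = 0 -> e3 = 0 -> e4 = 0 -> e5 = 0 -> e6 = 0 ->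
  X = c1 * e1 + c2 * e2 + c3 * e3 + c4 * e4 + c5 * e5 + c6 * e6 -> X = 0.
Proof. intros -> -> -> -> -> -> ->. ring. Qed.

Lemma lcE c1 c2 c3 c4 c5 c6 e1 e2 e3 e4 e5 e6 X Y :
  e1 = 0 -> e2 = 0 -> e3 = 0 -> e4 = 0 -> e5 = 0 -> e6 = 0 ->
  X - Y = c1 * e1 + c2 * e2 + c3 * e3 + c4 * e4 + c5 * e5 + c6 * e6 -> X = Y.
Proof. intros -> -> -> -> -> -> H. lra. Qed.

Lemma alg (a b U T e f : R) : a <> 0 -> a * b ^ 2 - 4 * a ^ 2 <> 0 ->
  U - e = 0 -> T + a * f = 0 -> T + b * e - a * f = 0 -> a * U + a * e + b * T = 0 ->
  e = 0 /\ f = 0 /\ U = 0 /\ T = 0.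
Proof.
  intros ha hd h1 h2 h3 h4.
  assert (H : (a * b ^ 2 - 4 * a ^ 2) * f =
     2 * a * ((T + b * e - a * f) - (T + a * f)) - b * ((a * U + a * e + b * T) - a * (U - e) - b * (T + a * f))) by ring.
  rewrite h1, h2, h3, h4 in H.
  replace (2 * a * (0 - 0) - b * (0 - a * 0 - b * 0)) with 0 in H by ring.
  assert (Hf : f = 0).
  { apply Rmult_integral in H. destruct H as [H|H]; [|exact H]. exfalso. apply hd. rewrite H. ring. }
  subst f.
  assert (He : a * e = 0) by nra.
  apply Rmult_integral in He. destruct He as [He|He]; [contradiction|subst e].
  assert (T = 0) by lra. subst T.
  assert (a * U = 0) by lra. apply Rmult_integral in H0. destruct H0; [contradiction|].
  repeat split; lra.
Qed.


Ltac ex_solve := unfold exdx, exdy; assumption.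

Lemma if_dir (alpha beta : R) (Om : R -> R -> Prop)
  (a11 a12 a21 a22 b11 b12 b21 b22 c1 c2 c3 d1 d2 d3 : R -> R -> R) :
  plane_domain Om ->
  C1_on Om a11 -> C1_on Om a12 -> C1_on Om a21 -> C1_on Om a22 ->
  C1_on Om b11 -> C1_on Om b12 -> C1_on Om b21 -> C1_on Om b22 ->
  C1_on Om c1 -> C1_on Om c2 -> C1_on Om c3 ->
  C1_on Om d1 -> C1_on Om d2 -> C1_on Om d3 ->
   (holomorphic alpha beta Om c1 d1 /\
    holomorphic alpha beta Om c3 d3 /\
    (forall x y, Om x y ->
       c2 x y = - alpha * d1 x y /\ d2 x y = c1 x y - beta * d1 x y) /\
    exists A1 A2 : R -> R -> R,
      holomorphic alpha beta Om A1 A2 /\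
      forall x y, Om x y ->
        a21 x y = - alpha * A2 x y + a12 x y /\
        a22 x y = alpha * A1 x y - alpha * a11 x y - beta * a12 x y /\
        b21 x y = A1 x y - beta * A2 x y + b12 x y /\
        b22 x y = alpha * A2 x y - alpha * b11 x y - beta * b12 x y) ->
  associated alpha beta Om
      (opP a11 a12 a21 a22 c1 c2 c3)
      (opP b11 b12 b21 b22 d1 d2 d3).
Proof.
  intros Hpd Ha11 Ha12 Ha21 Ha22 Hb11 Hb12 Hb21 Hb22 Hc1 Hc2 Hc3 Hd1 Hd2 Hd3
    [[_ [_ Hcd1]] [[_ [_ Hcd3]] [Hcd [A1 [A2 [[HA1 [HA2 HAe]] Hrel]]]]]].
  destruct Hpd as [_ [HO _]].
  intros u v Cu Cv Hw.
  split; [apply C1_opP; assumption | split; [apply C1_opP; assumption |]].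
  intros x y Hp.
  rewrite (dx_opP_eq Om a11), (dy_opP_eq Om a11), (dx_opP_eq Om b11), (dy_opP_eq Om b11); try assumption.
  unfold dxP_formula, dyP_formula.
  pose proof Cu as [Hu [Hux Huy]]. pose proof Cv as [Hv [Hvx Hvy]].
  getC1all Ha11 x y Hp. getC1all Ha12 x y Hp. getC1all Ha21 x y Hp. getC1all Ha22 x y Hp.
  getC1all Hb11 x y Hp. getC1all Hb12 x y Hp. getC1all Hb21 x y Hp. getC1all Hb22 x y Hp.
  getC1all Hc1 x y Hp. getC1all Hc2 x y Hp. getC1all Hc3 x y Hp.
  getC1all Hd1 x y Hp. getC1all Hd2 x y Hp. getC1all Hd3 x y Hp.
  getC1all HA1 x y Hp. getC1all HA2 x y Hp.
  getC1all Hu x y Hp. getC1all Hux x y Hp. getC1all Huy x y Hp.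
  getC1all Hv x y Hp. getC1all Hvx x y Hp. getC1all Hvy x y Hp.
  destruct Hw as [_ [_ Hw]].
  destruct (Hw x y Hp) as [w1 w2].
  assert (sx1 := dx_zero5 Om 1 (-alpha) 0 0 0 (dx u) (dy v) u u u x y HO Hp
     ltac:(intros s t Hst; destruct (Hw s t Hst); lra) ltac:(ex_solve) ltac:(ex_solve)
     ltac:(ex_solve) ltac:(ex_solve) ltac:(ex_solve)).
  assert (sy1 := dy_zero5 Om 1 (-alpha) 0 0 0 (dx u) (dy v) u u u x y HO Hp
     ltac:(intros s t Hst; destruct (Hw s t Hst); lra) ltac:(ex_solve) ltac:(ex_solve)
     ltac:(ex_solve) ltac:(ex_solve) ltac:(ex_solve)).
  assert (sx2 := dx_zero5 Om 1 1 (-beta) 0 0 (dy u) (dx v) (dy v) u u x y HO Hp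
     ltac:(intros s t Hst; destruct (Hw s t Hst); lra) ltac:(ex_solve) ltac:(ex_solve)
     ltac:(ex_solve) ltac:(ex_solve) ltac:(ex_solve)).
  assert (sy2 := dy_zero5 Om 1 1 (-beta) 0 0 (dy u) (dx v) (dy v) u u x y HO Hp
     ltac:(intros s t Hst; destruct (Hw s t Hst); lra) ltac:(ex_solve) ltac:(ex_solve)
     ltac:(ex_solve) ltac:(ex_solve) ltac:(ex_solve)).
  assert (schu := schwarz_C2 Om u x y HO Hp Cu).
  assert (schv := schwarz_C2 Om v x y HO Hp Cv).
  Ltac rel5 Hrel := intros s t Hst; destruct (Hrel s t Hst) as [? [? [? ?]]]; lra.
  assert (r1x := dx_zero5 Om 1 alpha (-1) 0 0 a21 A2 a12 u u x y HO Hp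
     ltac:(rel5 Hrel) ltac:(ex_solve) ltac:(ex_solve) ltac:(ex_solve) ltac:(ex_solve) ltac:(ex_solve)).
  assert (r1y := dy_zero5 Om 1 alpha (-1) 0 0 a21 A2 a12 u u x y HO Hp
     ltac:(rel5 Hrel) ltac:(ex_solve) ltac:(ex_solve) ltac:(ex_solve) ltac:(ex_solve) ltac:(ex_solve)).
  assert (r2x := dx_zero5 Om 1 (-alpha) alpha beta 0 a22 A1 a11 a12 u x y HO Hp
     ltac:(rel5 Hrel) ltac:(ex_solve) ltac:(ex_solve) ltac:(ex_solve) ltac:(ex_solve) ltac:(ex_solve)).
  assert (r2y := dy_zero5 Om 1 (-alpha) alpha beta 0 a22 A1 a11 a12 u x y HO Hp
     ltac:(rel5 Hrel) ltac:(ex_solve) ltac:(ex_solve) ltac:(ex_solve) ltac:(ex_solve) ltac:(ex_solve)).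
  assert (r3x := dx_zero5 Om 1 (-1) beta (-1) 0 b21 A1 A2 b12 u x y HO Hp
     ltac:(rel5 Hrel) ltac:(ex_solve) ltac:(ex_solve) ltac:(ex_solve) ltac:(ex_solve) ltac:(ex_solve)).
  assert (r3y := dy_zero5 Om 1 (-1) beta (-1) 0 b21 A1 A2 b12 u x y HO Hp
     ltac:(rel5 Hrel) ltac:(ex_solve) ltac:(ex_solve) ltac:(ex_solve) ltac:(ex_solve) ltac:(ex_solve)).
  assert (r4x := dx_zero5 Om 1 (-alpha) alpha beta 0 b22 A2 b11 b12 u x y HO Hp
     ltac:(rel5 Hrel) ltac:(ex_solve) ltac:(ex_solve) ltac:(ex_solve) ltac:(ex_solve) ltac:(ex_solve)).
  assert (r4y := dy_zero5 Om 1 (-alpha) alpha beta 0 b22 A2 b11 b12 u x y HO Hp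
     ltac:(rel5 Hrel) ltac:(ex_solve) ltac:(ex_solve) ltac:(ex_solve) ltac:(ex_solve) ltac:(ex_solve)).
  Ltac rel2 Hcd := intros s t Hst; destruct (Hcd s t Hst) as [? ?]; lra.
  assert (r5x := dx_zero5 Om 1 alpha 0 0 0 c2 d1 u u u x y HO Hp
     ltac:(rel2 Hcd) ltac:(ex_solve) ltac:(ex_solve) ltac:(ex_solve) ltac:(ex_solve) ltac:(ex_solve)).
  assert (r5y := dy_zero5 Om 1 alpha 0 0 0 c2 d1 u u u x y HO Hp
     ltac:(rel2 Hcd) ltac:(ex_solve) ltac:(ex_solve) ltac:(ex_solve) ltac:(ex_solve) ltac:(ex_solve)).
  assert (r6x := dx_zero5 Om 1 (-1) beta 0 0 d2 c1 d1 u u x y HO Hp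
     ltac:(rel2 Hcd) ltac:(ex_solve) ltac:(ex_solve) ltac:(ex_solve) ltac:(ex_solve) ltac:(ex_solve)).
  assert (r6y := dy_zero5 Om 1 (-1) beta 0 0 d2 c1 d1 u u x y HO Hp
     ltac:(rel2 Hcd) ltac:(ex_solve) ltac:(ex_solve) ltac:(ex_solve) ltac:(ex_solve) ltac:(ex_solve)).
  destruct (Hrel x y Hp) as [v1 [v2 [v3 v4]]].
  destruct (Hcd x y Hp) as [v5 v6].
  destruct (HAe x y Hp) as [cA1 cA2].
  destruct (Hcd1 x y Hp) as [cc1 cc2].
  destruct (Hcd3 x y Hp) as [cd1 cd2].
  assert (e1 : dx a21 x y = - alpha * dx A2 x y + dx a12 x y) by lra.
  assert (e2 : dy a21 x y = - alpha * dy A2 x y + dy a12 x y) by lra.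
  assert (e3 : dx a22 x y = alpha * dx A1 x y - alpha * dx a11 x y - beta * dx a12 x y) by lra.
  assert (e4 : dy a22 x y = alpha * dy A1 x y - alpha * dy a11 x y - beta * dy a12 x y) by lra.
  assert (e5 : dx b21 x y = dx A1 x y - beta * dx A2 x y + dx b12 x y) by lra.
  assert (e6 : dy b21 x y = dy A1 x y - beta * dy A2 x y + dy b12 x y) by lra.
  assert (e7 : dx b22 x y = alpha * dx A2 x y - alpha * dx b11 x y - beta * dx b12 x y) by lra.
  assert (e8 : dy b22 x y = alpha * dy A2 x y - alpha * dy b11 x y - beta * dy b12 x y) by lra.
  assert (e9 : dx c2 x y = - alpha * dx d1 x y) by lra.
  assert (e10 : dy c2 x y = - alpha * dy d1 x y) by lra.
  assert (e11 : dx d2 x y = dx c1 x y - beta * dx d1 x y) by lra.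
  assert (e12 : dy d2 x y = dy c1 x y - beta * dy d1 x y) by lra.
  assert (e13 : dx A1 x y = alpha * dy A2 x y) by lra.
  assert (e14 : dy A1 x y = beta * dy A2 x y - dx A2 x y) by lra.
  assert (e15 : dx c1 x y = alpha * dy d1 x y) by lra.
  assert (e16 : dy c1 x y = beta * dy d1 x y - dx d1 x y) by lra.
  assert (e17 : dx c3 x y = alpha * dy d3 x y) by lra.
  assert (e18 : dy c3 x y = beta * dy d3 x y - dx d3 x y) by lra.
  assert (f1 : dy (dx v) x y = dx (dy v) x y) by lra.
  assert (f2 : dx (dx u) x y = alpha * dx (dy v) x y) by lra.
  assert (f3 : dy (dx u) x y = alpha * dy (dy v) x y) by lra.
  assert (f4 : dx (dy u) x y = alpha * dy (dy v) x y) by lra.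
  assert (f5 : dx (dx v) x y = beta * dx (dy v) x y - alpha * dy (dy v) x y) by lra.
  assert (f6 : dy (dy u) x y = beta * dy (dy v) x y - dx (dy v) x y) by lra.
  assert (f7 : dx u x y = alpha * dy v x y) by lra.
  assert (f8 : dy u x y = beta * dy v x y - dx v x y) by lra.
  rewrite e1, e2, e3, e4, e5, e6, e7, e8, e9, e10, e11, e12, v1, v2, v3, v4, v5, v6.
  rewrite e13, e14, e15, e16, e17, e18, f1, f2, f3, f4, f5, f6, f7, f8.
  split; ring.
Qed.


Lemma dx_lin3 k1 k2 k3 (f1 f2 f3 : R -> R -> R) x y :
  exdx f1 x y -> exdx f2 x y -> exdx f3 x y ->
  dx (fun s t => k1 * f1 s t + k2 * f2 s t + k3 * f3 s t) x y
  = k1 * dx f1 x y + k2 * dx f2 x y + k3 * dx f3 x y.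
Proof. unfold exdx; intros. apply dx_is. auto_derive. repeat split; assumption. unfold dx; ring. Qed.

Lemma dy_lin3 k1 k2 k3 (f1 f2 f3 : R -> R -> R) x y :
  exdy f1 x y -> exdy f2 x y -> exdy f3 x y ->
  dy (fun s t => k1 * f1 s t + k2 * f2 s t + k3 * f3 s t) x y
  = k1 * dy f1 x y + k2 * dy f2 x y + k3 * dy f3 x y.
Proof. unfold exdy; intros. apply dy_is. auto_derive. repeat split; assumption. unfold dy; ring. Qed.


Lemma onlyif_dir (alpha beta : R) (Om : R -> R -> Prop)
  (a11 a12 a21 a22 b11 b12 b21 b22 c1 c2 c3 d1 d2 d3 : R -> R -> R) :
  alpha <> 0 ->
  alpha * beta ^ 2 - 4 * alpha ^ 2 <> 0 ->
  plane_domain Om ->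
  C1_on Om a11 -> C1_on Om a12 -> C1_on Om a21 -> C1_on Om a22 ->
  C1_on Om b11 -> C1_on Om b12 -> C1_on Om b21 -> C1_on Om b22 ->
  C1_on Om c1 -> C1_on Om c2 -> C1_on Om c3 ->
  C1_on Om d1 -> C1_on Om d2 -> C1_on Om d3 ->
  associated alpha beta Om
      (opP a11 a12 a21 a22 c1 c2 c3)
      (opP b11 b12 b21 b22 d1 d2 d3) ->
   (holomorphic alpha beta Om c1 d1 /\
    holomorphic alpha beta Om c3 d3 /\
    (forall x y, Om x y ->
       c2 x y = - alpha * d1 x y /\ d2 x y = c1 x y - beta * d1 x y) /\
    exists A1 A2 : R -> R -> R,
      holomorphic alpha beta Om A1 A2 /\
      forall x y, Om x y ->
        a21 x y = - alpha * A2 x y + a12 x y /\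
        a22 x y = alpha * A1 x y - alpha * a11 x y - beta * a12 x y /\
        b21 x y = A1 x y - beta * A2 x y + b12 x y /\
        b22 x y = alpha * A2 x y - alpha * b11 x y - beta * b12 x y).
Proof.
  intros Hal Hdisc Hpd Ha11 Ha12 Ha21 Ha22 Hb11 Hb12 Hb21 Hb22 Hc1 Hc2 Hc3 Hd1 Hd2 Hd3 Hass.
  destruct Hpd as [_ [HO _]].
  pose proof (fun k0 k1 k2 k3 k4 k5 m0 m1 m2 m3 m4 m5 x y =>
    test_eq alpha beta Om a11 a12 a21 a22 b11 b12 b21 b22 c1 c2 c3 d1 d2 d3
      k0 k1 k2 k3 k4 k5 m0 m1 m2 m3 m4 m5 x y
      Ha11 Ha12 Ha21 Ha22 Hb11 Hb12 Hb21 Hb22 Hc1 Hc2 Hc3 Hd1 Hd2 Hd3 Hass) as TE.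
  assert (HI : forall x y, Om x y ->
     alpha * a11 x y + beta * a21 x y + 1 * a22 x y + alpha * b12 x y + (- alpha) * b21 x y = 0 /\
     1 * a12 x y + (-1) * a21 x y + (- alpha) * b11 x y + (-1) * b22 x y + (- beta) * b12 x y = 0).
  { intros x y Hp.
    destruct (TE 0 0 0 0 0 0 0 0 0 0 0 0 x y ltac:(lra) ltac:(lra) ltac:(lra) ltac:(lra) ltac:(lra) ltac:(lra) Hp) as [E01 E02].
    destruct (TE 0 0 0 (-alpha) 0 1 0 0 0 (-beta) (-2) 0 x y ltac:(lra) ltac:(lra) ltac:(lra) ltac:(lra) ltac:(lra) ltac:(lra) Hp) as [Z1 Z2].
    unfold Pxv, Pyv in *. split.
    - apply (lc6 (-/2) (/2) 0 0 0 0 _ _ _ _ _ _ _ Z1 E01 E01 E01 E01 E01). field.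
    - apply (lc6 (/2) (-/2) 0 0 0 0 _ _ _ _ _ _ _ Z2 E02 E02 E02 E02 E02). field. }
  assert (Core : forall x y, Om x y ->
     c2 x y + alpha * d1 x y = 0 /\
     d2 x y - c1 x y + beta * d1 x y = 0 /\
     dx a12 x y - dx a21 x y + (alpha * dy a11 x y + beta * dy a21 x y + dy a22 x y) = 0 /\
     (alpha * dx a11 x y + beta * dx a21 x y + dx a22 x y)
       - beta * (alpha * dy a11 x y + beta * dy a21 x y + dy a22 x y)
       - alpha * (dy a12 x y - dy a21 x y) = 0).
  { intros x y Hp.
    destruct (TE 0 0 0 0 0 0 0 0 0 0 0 0 x y ltac:(lra) ltac:(lra) ltac:(lra) ltac:(lra) ltac:(lra) ltac:(lra) Hp) as [E01 E02].
    destruct (TE 0 0 1 0 0 0 0 (-1) 0 0 0 0 x y ltac:(lra) ltac:(lra) ltac:(lra) ltac:(lra) ltac:(lra) ltac:(lra) Hp) as [EZ1 EZ2].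
    destruct (TE 0 alpha 0 0 0 0 0 beta 1 0 0 0 x y ltac:(lra) ltac:(lra) ltac:(lra) ltac:(lra) ltac:(lra) ltac:(lra) Hp) as [EW1 EW2].
    getC1all Ha11 x y Hp. getC1all Ha12 x y Hp. getC1all Ha21 x y Hp. getC1all Ha22 x y Hp.
    getC1all Hb11 x y Hp. getC1all Hb12 x y Hp. getC1all Hb21 x y Hp. getC1all Hb22 x y Hp.
    assert (dIx := dx_zero5 Om _ _ _ _ _ a11 a21 a22 b12 b21 x y HO Hp (fun s t H => proj1 (HI s t H))
       ltac:(ex_solve) ltac:(ex_solve) ltac:(ex_solve) ltac:(ex_solve) ltac:(ex_solve)).
    assert (dIy := dy_zero5 Om _ _ _ _ _ a11 a21 a22 b12 b21 x y HO Hp (fun s t H => proj1 (HI s t H))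
       ltac:(ex_solve) ltac:(ex_solve) ltac:(ex_solve) ltac:(ex_solve) ltac:(ex_solve)).
    assert (dIIx := dx_zero5 Om _ _ _ _ _ a12 a21 b11 b22 b12 x y HO Hp (fun s t H => proj2 (HI s t H))
       ltac:(ex_solve) ltac:(ex_solve) ltac:(ex_solve) ltac:(ex_solve) ltac:(ex_solve)).
    assert (dIIy := dy_zero5 Om _ _ _ _ _ a12 a21 b11 b22 b12 x y HO Hp (fun s t H => proj2 (HI s t H))
       ltac:(ex_solve) ltac:(ex_solve) ltac:(ex_solve) ltac:(ex_solve) ltac:(ex_solve)).
    unfold Pxv, Pyv in *.
    apply (alg alpha beta); [exact Hal | exact Hdisc | | | |].
    - apply (lc6 1 (-1) 1 0 0 0 _ _ _ _ _ _ _ EZ1 E01 dIy dIy dIy dIy). ring.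
    - apply (lc6 (-alpha) alpha 1 (-beta) 0 0 _ _ _ _ _ _ _ EZ2 E02 dIx dIy dIy dIy). ring.
    - apply (lc6 1 (-1) (-alpha) (-beta) 0 0 _ _ _ _ _ _ _ EW1 E01 dIIy dIy dIy dIy). ring.
    - apply (lc6 alpha (-alpha) alpha beta (-(alpha*beta)) (-(beta^2)) _ _ _ _ _ _ _ EW2 E02 dIIx dIx dIIy dIy). ring. }
  split; [|split; [|split]].
  - split; [exact Hc1 | split; [exact Hd1 |]].
    intros x y Hp.
    destruct (TE 0 0 0 0 0 0 0 0 0 0 0 0 x y ltac:(lra) ltac:(lra) ltac:(lra) ltac:(lra) ltac:(lra) ltac:(lra) Hp) as [E01 E02].
    destruct (TE 1 0 0 0 0 0 0 0 0 0 0 0 x y ltac:(lra) ltac:(lra) ltac:(lra) ltac:(lra) ltac:(lra) ltac:(lra) Hp) as [E11 E12].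
    unfold Pxv, Pyv in *. split.
    + apply (lc6 1 (-1) 0 0 0 0 _ _ _ _ _ _ _ E11 E01 E01 E01 E01 E01). ring.
    + apply (lc6 1 (-1) 0 0 0 0 _ _ _ _ _ _ _ E12 E02 E01 E01 E01 E01). ring.
  - split; [exact Hc3 | split; [exact Hd3 |]].
    intros x y Hp.
    destruct (TE 0 0 0 0 0 0 0 0 0 0 0 0 x y ltac:(lra) ltac:(lra) ltac:(lra) ltac:(lra) ltac:(lra) ltac:(lra) Hp) as [E01 E02].
    unfold Pxv, Pyv in *. split.
    + apply (lc6 1 0 0 0 0 0 _ _ _ _ _ _ _ E01 E01 E01 E01 E01 E01). ring.
    + apply (lc6 1 0 0 0 0 0 _ _ _ _ _ _ _ E02 E02 E01 E01 E01 E01). ring.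
  - intros x y Hp. destruct (Core x y Hp) as [ce [cf _]]. split; lra.
  - exists (fun s t => / alpha * a22 s t + 1 * a11 s t + (beta / alpha) * a12 s t).
    exists (fun s t => / alpha * a12 s t + (- / alpha) * a21 s t + 0 * a12 s t).
    split.
    + split; [apply C1_lin3; assumption | split; [apply C1_lin3; assumption |]].
      intros x y Hp.
      getC1all Ha11 x y Hp. getC1all Ha12 x y Hp. getC1all Ha21 x y Hp. getC1all Ha22 x y Hp.
      rewrite (dx_lin3 _ _ _ a22 a11 a12), (dy_lin3 _ _ _ a22 a11 a12),
        (dx_lin3 _ _ _ a12 a21 a12), (dy_lin3 _ _ _ a12 a21 a12); try ex_solve.
      destruct (Core x y Hp) as [_ [_ [hU hT]]].
      split.
      * apply (lc6 (/alpha) (beta/alpha) 0 0 0 0 _ _ _ _ _ _ _ hT hU hT hT hT hT). field. exact Hal.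
      * apply (lc6 (/alpha) 0 0 0 0 0 _ _ _ _ _ _ _ hU hU hT hT hT hT). field. exact Hal.
    + intros x y Hp. destruct (HI x y Hp) as [hI hII]. cbv beta.
      split; [|split; [|split]].
      * field. exact Hal.
      * field. exact Hal.
      * apply (lcE (-/alpha) 0 0 0 0 0 _ _ _ _ _ _ _ _ hI hI hI hI hI hI). field. exact Hal.
      * apply (lcE (-1) 0 0 0 0 0 _ _ _ _ _ _ _ _ hII hI hI hI hI hI). field. exact Hal.
Qed.

Theorem lemma2 (alpha beta : R) (Om : R -> R -> Prop)
  (a11 a12 a21 a22 b11 b12 b21 b22 c1 c2 c3 d1 d2 d3 : R -> R -> R) :
  alpha <> 0 ->
  alpha * beta ^ 2 - 4 * alpha ^ 2 <> 0 ->
  plane_domain Om ->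
  C1_on Om a11 -> C1_on Om a12 -> C1_on Om a21 -> C1_on Om a22 ->
  C1_on Om b11 -> C1_on Om b12 -> C1_on Om b21 -> C1_on Om b22 ->
  C1_on Om c1 -> C1_on Om c2 -> C1_on Om c3 ->
  C1_on Om d1 -> C1_on Om d2 -> C1_on Om d3 ->
  (associated alpha beta Om
      (opP a11 a12 a21 a22 c1 c2 c3)
      (opP b11 b12 b21 b22 d1 d2 d3)
   <->
   (holomorphic alpha beta Om c1 d1 /\
    holomorphic alpha beta Om c3 d3 /\
    (forall x y, Om x y ->
       c2 x y = - alpha * d1 x y /\ d2 x y = c1 x y - beta * d1 x y) /\
    exists A1 A2 : R -> R -> R,
      holomorphic alpha beta Om A1 A2 /\
      forall x y, Om x y ->
        a21 x y = - alpha * A2 x y + a12 x y /\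
        a22 x y = alpha * A1 x y - alpha * a11 x y - beta * a12 x y /\
        b21 x y = A1 x y - beta * A2 x y + b12 x y /\
        b22 x y = alpha * A2 x y - alpha * b11 x y - beta * b12 x y)).
Proof.
  intros Hal Hdisc Hpd Ha11 Ha12 Ha21 Ha22 Hb11 Hb12 Hb21 Hb22 Hc1 Hc2 Hc3 Hd1 Hd2 Hd3.
  split.
  - apply onlyif_dir; assumption.
  - apply if_dir; assumption.
Qed.
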